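(* The class of weakly separable extensions is Morita invariant: if $A/B$ is weakly separable and $A/B$ is Morita equivalent to $A'/B'$, then $A'/B'$ is weakly separable.
   Context: All rings have identity, subrings contain the identity, modules are unital; a ring extension $A/B$ means $B$ is a subring of $A$. A $B$-derivation of $A$ to $A$ is an additive map $D:A\to A$ with $D(xy)=D(x)y+xD(y)$ for all $x,y\in A$ and $D(b)=0$ for all $b\in B$; it is inner if there is $s\in A$ with $D(x)=sx-xs$ for all $x\in A$. $A/B$ is weakly separable if every $B$-derivation of $A$ to $A$ is inner. For bimodules ${}_AX_{A'}$, ${}_AY_{A'}$, write $X\mid Y$ if $X$ is isomorphic to a direct summand of a finite direct sum of copies of $Y$, and $X\sim Y$ if $X\mid Y$ and $Y\mid X$. $\mathrm{End}^r({}_AM)$ denotes the ring of left $A$-endomorphisms of $M$ acting on the right. A bimodule ${}_AM_{A'}$ is a Morita module if ${}_AM\sim{}_AA$ and $\mathrm{End}^r({}_AM)=A'$. Ring extensions $A/B$ and $A'/B'$ are Morita equivalent if there exist Morita modules ${}_AM_{A'}$ and ${}_BN_{B'}$ with ${}_AA\otimes_BN_{B'}\cong{}_AM_{B'}$. A class $\mathscr C$ is Morita invariant if whenever $A/B\in\mathscr C$ and $A/B$ is Morita equivalent to $A'/B'$, then $A'/B'\in\mathscr C$. *)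

(* Defs.v *)
From HB Require Import structures.
From mathcomp Require Import all_boot all_algebra.
Set Implicit Arguments. Unset Strict Implicit. Unset Printing Implicit Defensive.
Import GRing.Theory.
Local Open Scope ring_scope.

(* A ring extension A/B is encoded by an injective unital ring morphism
   iota : B -> A (B is identified with its image, a subring of A). *)

Definition is_derivation (B A : pzRingType) (iota : B -> A) (D : A -> A) : Prop :=
  [/\ forall x y, D (x + y) = D x + D y,
      forall x y, D (x * y) = D x * y + x * D y
    & forall b, D (iota b) = 0].

Definition is_inner (A : pzRingType) (D : A -> A) : Prop :=
  exists s : A, forall x, D x = s * x - x * s.

Definition weakly_separable (B A : pzRingType) (iota : B -> A) : Prop :=
  forall D : A -> A, is_derivation iota D -> is_inner D.

Definition lmod_ax (R : pzRingType) (X : zmodType) (act : R -> X -> X) : Prop :=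
  [/\ forall x, act 1 x = x,
      forall r s x, act (r * s) x = act r (act s x),
      forall r x y, act r (x + y) = act r x + act r y
    & forall r s x, act (r + s) x = act r x + act s x].

Definition rmod_ax (R : pzRingType) (X : zmodType) (act : X -> R -> X) : Prop :=
  [/\ forall x, act x 1 = x,
      forall r s x, act x (r * s) = act (act x r) s,
      forall r x y, act (x + y) r = act x r + act y r
    & forall r s x, act x (r + s) = act x r + act x s].

Definition bimod_ax (R S : pzRingType) (X : zmodType)
    (la : R -> X -> X) (ra : X -> S -> X) : Prop :=
  [/\ lmod_ax la, rmod_ax ra
    & forall r s x, la r (ra x s) = ra (la r x) s].

(* X | Y as left R-modules: X is isomorphic to a direct summand of a finite
   direct sum Y^n, i.e. there are left R-linear maps f : X -> Y^n and
   g : Y^n -> X with g \o f = id (Y^n with the componentwise structure). *)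
Definition ldivides (R : pzRingType) (X Y : zmodType)
    (actX : R -> X -> X) (actY : R -> Y -> Y) : Prop :=
  exists (n : nat) (f : X -> 'I_n -> Y) (g : ('I_n -> Y) -> X),
    [/\ forall x x' i, f (x + x') i = f x i + f x' i,
        forall r x i, f (actX r x) i = actY r (f x i),
        forall u v, g (fun i => u i + v i) = g u + g v,
        forall r u, g (fun i => actY r (u i)) = actX r (g u)
      & forall x, g (f x) = x].

Definition lreg (R : pzRingType) : R -> R -> R := fun r x => r * x.

(* Morita module _R M_{R'}: a bimodule with _R M ~ _R R and
   End^r(_R M) = R', i.e. the canonical map R' -> End^r(_R M),
   r' |-> (m |-> m r'), is bijective. *)
Definition morita_module (R R' : pzRingType) (M : zmodType)
    (la : R -> M -> M) (ra : M -> R' -> M) : Prop :=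
  [/\ bimod_ax la ra,
      ldivides la (@lreg R) /\ ldivides (@lreg R) la,
      (forall r1 r2 : R', (forall m, ra m r1 = ra m r2) -> r1 = r2)
    & (forall h : M -> M,
         (forall m m', h (m + m') = h m + h m') ->
         (forall r m, h (la r m) = la r (h m)) ->
         exists r' : R', forall m, h m = ra m r')].

Definition balanced (B A : pzRingType) (iota : B -> A) (N P : zmodType)
    (lbN : B -> N -> N) (psi : A -> N -> P) : Prop :=
  [/\ forall a1 a2 n, psi (a1 + a2) n = psi a1 n + psi a2 n,
      forall a n1 n2, psi a (n1 + n2) = psi a n1 + psi a n2
    & forall b a n, psi (a * iota b) n = psi a (lbN b n)].

(* _A A (x)_B N_{B'} ~= _A M_{B'} as A-B'-bimodules (M a right B'-module by
   restriction along iota').  Stated via the defining universal property of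
   the tensor product: phi : A x N -> M is B-balanced, compatible with the
   left A-action and the right B'-action, and universal among B-balanced
   biadditive maps into abelian groups (unique additive factorization). *)
Definition tensor_iso (B A B' A' : pzRingType) (iota : B -> A) (iota' : B' -> A')
    (M N : zmodType) (laM : A -> M -> M) (raM : M -> A' -> M)
    (lbN : B -> N -> N) (rbN : N -> B' -> N) : Prop :=
  exists phi : A -> N -> M,
    [/\ balanced iota lbN phi,
        forall a1 a n, phi (a1 * a) n = laM a1 (phi a n),
        forall b' a n, phi a (rbN n b') = raM (phi a n) (iota' b')
      & forall (P : zmodType) (psi : A -> N -> P), balanced iota lbN psi ->
          exists h : M -> P,
            [/\ forall m m', h (m + m') = h m + h m',
                forall a n, h (phi a n) = psi a n
              & forall h' : M -> P, (forall m m', h' (m + m') = h' m + h' m') ->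
                  (forall a n, h' (phi a n) = psi a n) -> forall m, h' m = h m]].

Definition morita_equivalent (B A B' A' : pzRingType)
    (iota : B -> A) (iota' : B' -> A') : Prop :=
  exists (M : zmodType) (laM : A -> M -> M) (raM : M -> A' -> M)
         (N : zmodType) (lbN : B -> N -> N) (rbN : N -> B' -> N),
    [/\ morita_module laM raM,
        morita_module lbN rbN
      & tensor_iso iota iota' laM raM lbN rbN].

(* Main.v *)
Require Import Defs.
From mathcomp Require Import all_boot all_algebra.
From Stdlib Require Import FunctionalExtensionality IndefiniteDescription.
Set Implicit Arguments. Unset Strict Implicit. Unset Printing Implicit Defensive.
Import GRing.Theory.
Local Open Scope ring_scope.

Lemma addf0 (U V : zmodType) (f : U -> V) :
  (forall x y, f (x + y) = f x + f y) -> f 0 = 0.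
Proof. by move=> fD; apply: (addrI (f 0)); rewrite -fD !addr0. Qed.

Lemma addfN (U V : zmodType) (f : U -> V) :
  (forall x y, f (x + y) = f x + f y) -> forall x, f (- x) = - f x.
Proof.
move=> fD x; apply: (addrI (f x)); rewrite -fD !subrr; exact: addf0.
Qed.

Lemma addfB (U V : zmodType) (f : U -> V) :
  (forall x y, f (x + y) = f x + f y) -> forall x y, f (x - y) = f x - f y.
Proof. by move=> fD x y; rewrite fD (addfN fD). Qed.

Lemma addf_sum (U V : zmodType) (f : U -> V) (n : nat) (F : 'I_n -> U) :
  (forall x y, f (x + y) = f x + f y) ->
  f (\sum_(i < n) F i) = \sum_(i < n) f (F i).
Proof. by move=> fD; apply: (big_morph f fD (addf0 fD)). Qed.

Arguments addf_sum {U V f n F} _.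

Lemma gen_basis (R : pzRingType) (Z : zmodType) (act : R -> Z -> Z) :
  lmod_ax act -> ldivides (@lreg R) act ->
  exists n (e : 'I_n -> Z) (gg : 'I_n -> Z -> R),
    [/\ forall i z z', gg i (z + z') = gg i z + gg i z',
        forall i r z, gg i (act r z) = r * gg i z
      & \sum_(i < n) gg i (e i) = 1].
Proof.
move=> [_ _ actDx _] [n [f [g [_ fL gD gL gf]]]].
have act0 r : act r 0 = 0 by apply: (addf0 (actDx r)).
pose gg i z := g (fun j => if j == i then z else 0).
have gsum (r : seq 'I_n) (F : 'I_n -> 'I_n -> Z) :
    g (fun j => \sum_(i <- r) F i j) = \sum_(i <- r) g (F i).
  have g0 : g (fun=> 0) = 0.
    have e : (fun _ : 'I_n => (0 : Z)) = (fun j => 0 + 0).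
      by apply: functional_extensionality => j; rewrite addr0.
    by apply: (addrI (g (fun=> 0))); rewrite addr0 {3}e gD.
  elim: r => [|x r IH].
    rewrite big_nil.
    have -> : (fun j : 'I_n => \sum_(i <- [::]) F i j) = (fun=> 0).
      by apply: functional_extensionality => j; rewrite big_nil.
    exact: g0.
  have -> : (fun j : 'I_n => \sum_(i <- x :: r) F i j) =
            (fun j => F x j + \sum_(i <- r) F i j).
    by apply: functional_extensionality => j; rewrite big_cons.
  by rewrite gD IH big_cons.
exists n, (fun i => f 1 i), gg; split.
- move=> i z z'; rewrite /gg -gD; congr g.
  by apply: functional_extensionality => j; case: (j == i); rewrite ?addr0.
- move=> i r z; rewrite /gg; rewrite -[r * _]/(lreg r _) -gL; congr g.
  by apply: functional_extensionality => j; case: (j == i); rewrite ?act0.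
- rewrite /gg.
  have -> : \sum_(i < n) g (fun j => if j == i then f 1 i else 0) =
            g (fun j => \sum_(i < n) (if j == i then f 1 i else 0)).
    by rewrite gsum.
  have -> : (fun j => \sum_(i < n) (if j == i then f 1 i else 0)) = f 1.
    apply: functional_extensionality => j.
    rewrite (bigD1 j) //= eqxx big1 ?addr0 // => i /negbTE.
    by rewrite eq_sym => ->.
  exact: gf.
Qed.

Theorem theorem3p5 (B A B' A' : pzRingType)
    (iota : {rmorphism B -> A}) (iota' : {rmorphism B' -> A'}) :
  injective iota -> injective iota' ->
  weakly_separable iota -> morita_equivalent iota iota' ->
  weakly_separable iota'.
Proof.
move=> _ _ wsA [M [laM [raM [N [lbN [rbN [[bimM [_ divM] faithM endM]
  [bimN [_ divN] faithN endN] [phi [[phiDl phiDr phiB] phiL phiR univ]]]]]]]]].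
case: bimM => [lmM rmM laraM]; move: (lmM) (rmM) => [laM1 laMM laMDx laMDr] [raM1 raMM raMDx raMDr].
case: bimN => [lmN rmN lbrbN]; move: (lmN) (rmN) => [lbN1 lbNM lbNDx lbNDr] [rbN1 rbNM rbNDx rbNDr].
move=> D' [D'D D'M D'B].
have ext (h1 h2 : M -> M) : (forall x y, h1 (x + y) = h1 x + h1 y) ->
    (forall x y, h2 (x + y) = h2 x + h2 y) ->
    (forall a n, h1 (phi a n) = h2 (phi a n)) -> forall m, h1 m = h2 m.
  move=> h1D h2D e m.
  have bal : balanced iota lbN (fun a n => h1 (phi a n)).
    split=> [a1 a2 n|a n1 n2|b a n]; by rewrite ?phiDl ?phiDr ?h1D ?phiB.
  have [h [hD hphi huniq]] := univ _ _ bal.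
  rewrite (huniq h1 h1D (fun a n => erefl)) (huniq h2 h2D) //.
have faithA' (c1 c2 : A') : (forall n, raM (phi 1 n) c1 = raM (phi 1 n) c2) -> c1 = c2.
  move=> e; apply: faithM; apply: ext.
  - by move=> x y; rewrite raMDx.
  - by move=> x y; rewrite raMDx.
  by move=> a n; rewrite -[a]mulr1 phiL -!laraM e.
have [nN [eN [gN [gND gNL gN1]]]] := gen_basis lmN divN.
have [nM [eM [gM [gMD gML gM1]]]] := gen_basis lmM divM.
have laM0 r : laM r 0 = 0 by apply: addf0 (laMDx r).
have laM0x x : laM 0 x = 0 by apply: addf0 (fun r s => laMDr r s x).
have cex i m : exists c : A', forall n, raM (phi 1 n) c = laM (iota (gN i n)) m.
  pose psi a n := laM (a * iota (gN i n)) m.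
  have bal : balanced iota lbN psi.
    split=> [a1 a2 n|a n1 n2|b a n]; rewrite /psi.
    - by rewrite mulrDl laMDr.
    - by rewrite gND rmorphD mulrDr laMDr.
    - by rewrite gNL rmorphM mulrA.
  have [h [hD hphi _]] := univ _ _ bal.
  have hL a x : h (laM a x) = laM a (h x).
    apply: (ext (fun x => h (laM a x)) (fun x => laM a (h x))).
    - by move=> y z; rewrite laMDx hD.
    - by move=> y z; rewrite hD laMDx.
    by move=> a0 n; rewrite -phiL !hphi /psi !laMM.
  have [c hc] := endM h hD hL.
  by exists c => n; rewrite -hc hphi /psi mul1r.
pose c i m := proj1_sig (constructive_indefinite_description _ (cex i m)).
have cP i m n : raM (phi 1 n) (c i m) = laM (iota (gN i n)) m.
  exact: (proj2_sig (constructive_indefinite_description _ (cex i m)) n).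
have bex j n : exists b' : B', forall x, rbN x b' = lbN (gN j x) n.
  have hD x y : lbN (gN j (x + y)) n = lbN (gN j x) n + lbN (gN j y) n.
    by rewrite gND lbNDr.
  have hL b x : lbN (gN j (lbN b x)) n = lbN b (lbN (gN j x) n).
    by rewrite gNL lbNM.
  have [b' hb] := endN (fun x => lbN (gN j x) n) hD hL.
  by exists b' => x; rewrite hb.
pose beta j n := proj1_sig (constructive_indefinite_description _ (bex j n)).
have betaP j n x : rbN x (beta j n) = lbN (gN j x) n.
  exact: (proj2_sig (constructive_indefinite_description _ (bex j n)) x).
have decN n : n = \sum_(j < nN) rbN (eN j) (beta j n).
  under eq_bigr => j _ do rewrite betaP.
  by rewrite -(addf_sum (f := fun r : B => lbN r n)) ?gN1 ?lbN1 // => x y; rewrite lbNDr.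
have raMDxs (a' : A') : forall x y, raM (x + y) a' = raM x a' + raM y a'.
  by move=> x y; rewrite raMDx.
have raMDrs (x : M) : forall r s : A', raM x (r + s) = raM x r + raM x s.
  by move=> r s; rewrite raMDr.
have laMDrs (x : M) : forall r s : A, laM (r + s) x = laM r x + laM s x.
  by move=> r s; rewrite laMDr.
have phi1L r e : phi 1 (lbN r e) = laM (iota r) (phi 1 e).
  by rewrite -phiB mul1r -{1}[iota r]mulr1 phiL.
have cD i m m' : c i (m + m') = c i m + c i m'.
  by apply: faithA' => n; rewrite raMDr !cP laMDx.
have cR i m a' : c i (raM m a') = c i m * a'.
  by apply: faithA' => n; rewrite raMM !cP laraM.
have cB j b m : c j (laM (iota b) m) =
    \sum_(i < nN) iota' (beta j (lbN b (eN i))) * c i m.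
  apply: faithA' => n; rewrite cP -laMM -rmorphM.
  rewrite (addf_sum (raMDrs _)).
  under eq_bigr => i _ do rewrite raMM -phiR betaP -lbNM.
  under eq_bigr => i _ do rewrite phi1L -laraM cP -laMM -rmorphM.
  rewrite -(addf_sum (laMDrs _)) -rmorph_sum -mulr_sumr gN1 mulr1.
  done.
have D'0 : D' 0 = 0 by apply: addf0 D'D.
have D'Bl (b' : B') x : D' (iota' b' * x) = iota' b' * D' x.
  by rewrite D'M D'B mul0r add0r.
pose delta m := \sum_(i < nN) raM (phi 1 (eN i)) (D' (c i m)).
have deltaD m m' : delta (m + m') = delta m + delta m'.
  by rewrite /delta -big_split; apply: eq_bigr => i _; rewrite cD D'D raMDr.
have deltaR m a' : delta (raM m a') = raM (delta m) a' + raM m (D' a').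
  rewrite /delta (addf_sum (raMDxs a')).
  under eq_bigr => i _ do rewrite cR D'M raMDr !raMM.
  rewrite big_split /=; congr (_ + _).
  rewrite -(addf_sum (raMDxs (D' a'))).
  under eq_bigr => i _ do rewrite cP.
  by rewrite -(addf_sum (laMDrs m)) -rmorph_sum gN1 rmorph1 laM1.
have deltaB b m : delta (laM (iota b) m) = laM (iota b) (delta m).
  rewrite /delta (addf_sum (laMDx (iota b))).
  under eq_bigr => j _ do rewrite cB (addf_sum D'D) (addf_sum (raMDrs _)).
  under [RHS]eq_bigr => i _ do rewrite laraM -phi1L (decN (lbN b (eN i))) (addf_sum (phiDr 1)) (addf_sum (raMDxs _)).
  rewrite exchange_big /=; apply: eq_bigr => j _; apply: eq_bigr => i _.
  by rewrite D'Bl raMM phiR.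
have dcent (T : M -> M) : (forall x y, T (x + y) = T x + T y) ->
    (forall x a', T (raM x a') = raM (T x) a') ->
    forall x, T x = laM (\sum_(k < nM) gM k (T (eM k))) x.
  move=> TD TR x.
  rewrite -{1}[x]laM1 -gM1 (addf_sum (laMDrs x)) (addf_sum TD) (addf_sum (laMDrs x)).
  apply: eq_bigr => k _.
  have hD y z : laM (gM k (y + z)) x = laM (gM k y) x + laM (gM k z) x.
    by rewrite gMD laMDr.
  have hL a y : laM (gM k (laM a y)) x = laM a (laM (gM k y) x).
    by rewrite gML laMM.
  have [al hal] := endM (fun y => laM (gM k y) x) hD hL.
  by rewrite !hal TR.
have faithA (a1 a2 : A) : (forall x, laM a1 x = laM a2 x) -> a1 = a2.
  move=> e; rewrite -[a1]mulr1 -[a2]mulr1 -gM1 !mulr_sumr.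
  by apply: eq_bigr => k _; rewrite -!gML e.
pose Dd a := \sum_(k < nM) gM k (laM a (delta (eM k)) - delta (laM a (eM k))).
have DdP a x : laM (Dd a) x = laM a (delta x) - delta (laM a x).
  symmetry; apply: (dcent (fun x => laM a (delta x) - delta (laM a x))).
  - by move=> y z; rewrite deltaD laMDx laMDx deltaD opprD addrACA.
  - move=> y a'; rewrite laraM deltaR laMDx !laraM deltaR (addfB (raMDxs a')).
    by rewrite opprD addrACA subrr addr0.
have laMB a : forall x y, laM a (x - y) = laM a x - laM a y.
  exact: addfB (laMDx a).
have laMNr x (a : A) : laM (- a) x = - laM a x by exact: (@addfN _ _ (fun r => laM r x) (laMDrs x) a).
have Dder : is_derivation iota Dd.
  split.
  - move=> a1 a2; apply: faithA => x.
    by rewrite laMDr !DdP laMDr laMDr deltaD opprD addrACA.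
  - move=> a1 a2; apply: faithA => x.
    rewrite laMDr !laMM !DdP laMB laMM.
    by rewrite laMM [X in _ = X]addrC addrA subrK.
  - move=> b; apply: faithA => x.
    by rewrite DdP deltaB subrr laM0x.
have [s Ds] := wsA Dd Dder.
pose eps x := delta x + laM s x.
have epsD x y : eps (x + y) = eps x + eps y.
  by rewrite /eps deltaD laMDx addrACA.
have epsL a x : eps (laM a x) = laM a (eps x).
  have H := DdP a x; rewrite Ds laMDr laMNr !laMM in H.
  rewrite /eps laMDx.
  rewrite -[laM s (laM a x)](subrK (laM a (laM s x))) H.
  by rewrite addrCA addrA subrK.
have [t ht] := endM eps epsD epsL.
exists (- t) => a'; apply: faithM => x.
rewrite mulNr mulrN opprK raMDr (@addfN _ _ (fun r => raM x r) (raMDrs x)).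
rewrite !raMM -!ht /eps deltaR !raMDx laraM.
by rewrite addrC [raM (delta x) a' + raM x _]addrC -[_ + _ + raM (laM s x) a']addrA addrK.
Qed.
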